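(* Let $G$ and $H$ be nontrivial connected graphs with $\gamma_t(H)=2$. Then $\gamma_t(G)=\gamma_t(G\Box H)$ if and only if one of the following holds: (i) $G$ is isomorphic to $K_2$ and $\gamma(H)=1$; (ii) $H$ is isomorphic to $K_2$ and $G\in\mathcal{F}_1\cup\mathcal{F}_2\cup\mathcal{F}_3$.
   Context: All graphs are finite, simple, undirected. $\gamma(G)$ is the domination number and $\gamma_t(G)$ the total domination number (minimum size of a set $S$ with $N_G(S)=V(G)$, $N_G(S)$ the union of open neighborhoods of vertices of $S$). $G\Box H$ is the Cartesian product: vertex set $V(G)\times V(H)$, with $(u_1,v_1)\sim(u_2,v_2)$ iff either $u_1=u_2$ and $v_1v_2\in E(H)$, or $v_1=v_2$ and $u_1u_2\in E(G)$. $G[X]$ denotes the induced subgraph. The families are: $\mathcal{F}_1$ = graphs $G$ with $\gamma_t(G)=2\gamma(G)$; $\mathcal{F}_2$ = graphs $G$ having a minimum total dominating set $D$ that can be partitioned into two nonempty subsets $D_1,D_2$ with $D_1=V(G)\setminus N_G(D_2)$ and $D_2=V(G)\setminus N_G(D_1)$; $\mathcal{F}_3$ = graphs $G$ whose vertex set can be partitioned into two nonempty subsets $V_1,V_2$ with $G[V_1]\in\mathcal{F}_1$, $G[V_2]\in\mathcal{F}_2$, and $\gamma_t(G)=\gamma_t(G[V_1])+\gamma_t(G[V_2])$. *)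

(* Defs.v *)
From mathcomp Require Import all_boot.
Set Implicit Arguments. Unset Strict Implicit. Unset Printing Implicit Defensive.

Section Graphs.
Variable T : finType.
Variable e : rel T.

Definition simple_graph : Prop := symmetric e /\ irreflexive e.
Definition connected_graph : Prop := forall x y : T, connect e x y.
Definition nontrivial_graph : Prop := 1 < #|T|.

Definition open_nbhd (S : {set T}) : {set T} :=
  [set v | [exists u in S, e u v]].

Definition dominating (S : {set T}) : bool :=
  [forall v, (v \in S) || [exists u in S, e u v]].

Definition total_dominating (S : {set T}) : bool :=
  open_nbhd S == [set: T].

Definition has_tds : Prop := exists S : {set T}, total_dominating S.

Definition gamma : nat :=
  \big[minn/#|T|]_(S : {set T} | dominating S) #|S|.

(* total domination number (meaningful when has_tds holds) *)
Definition gamma_t : nat :=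
  \big[minn/#|T|]_(S : {set T} | total_dominating S) #|S|.

Definition min_tds (D : {set T}) : bool :=
  total_dominating D && (#|D| == gamma_t).

Definition F1 : Prop := has_tds /\ gamma_t = 2 * gamma.

Definition F2 : Prop :=
  exists D : {set T}, min_tds D /\
    exists D1 D2 : {set T},
      [/\ D1 != set0, D2 != set0, D1 :|: D2 = D, D1 :&: D2 = set0 &
          (D1 = ~: open_nbhd D2 /\ D2 = ~: open_nbhd D1)].
End Graphs.

Definition induced (T : finType) (e : rel T) (X : {set T}) :
  rel {x : T | x \in X} := fun u v => e (val u) (val v).
Arguments induced {T} e X.

Definition F3 (T : finType) (e : rel T) : Prop :=
  exists V1 V2 : {set T},
    [/\ V1 != set0, V2 != set0, V1 :|: V2 = [set: T], V1 :&: V2 = set0 &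
        [/\ F1 (induced e V1), F2 (induced e V2)
      & gamma_t e = gamma_t (induced e V1) + gamma_t (induced e V2)]].

Definition cart (T1 T2 : finType) (e1 : rel T1) (e2 : rel T2) : rel (T1 * T2) :=
  fun p q => ((p.1 == q.1) && e2 p.2 q.2) || ((p.2 == q.2) && e1 p.1 q.1).

Definition K2 : rel 'I_2 := fun i j => i != j.

Definition graph_iso (T1 T2 : finType) (e1 : rel T1) (e2 : rel T2) : Prop :=
  exists f : T1 -> T2, bijective f /\ forall x y, e2 (f x) (f y) = e1 x y.

(* Main.v *)
Require Import Defs.
From mathcomp Require Import all_boot zify.
Set Implicit Arguments. Unset Strict Implicit. Unset Printing Implicit Defensive.

Ltac slia := repeat (match goal with x := _ |- _ => clearbody x end); lia.

Lemma bigmin_le (I : finType) (P : pred I) (F : I -> nat) x0 i :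
  P i -> \big[minn/x0]_(j | P j) F j <= F i.
Proof.
move=> Pi; rewrite -big_filter.
have : i \in [seq j <- index_enum I | P j] by rewrite mem_filter Pi mem_index_enum.
elim: [seq j <- index_enum I | P j] => // a s IH; rewrite inE big_cons.
case/orP=> [/eqP -> | /IH h]; first by rewrite geq_minl.
by rewrite geq_min h orbT.
Qed.

Lemma bigmin_ge (I : finType) (P : pred I) (F : I -> nat) x0 k :
  k <= x0 -> (forall i, P i -> k <= F i) -> k <= \big[minn/x0]_(j | P j) F j.
Proof.
move=> h1 h2; apply: (big_ind (fun m => k <= m)) => //.
by move=> a b ha hb; rewrite leq_min ha hb.
Qed.

Lemma bigmin_attained (I : finType) (P : pred I) (F : I -> nat) x0 :
  (exists2 i, P i & F i = x0) ->
  exists2 i, P i & F i = \big[minn/x0]_(j | P j) F j.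
Proof.
move=> h; apply: (big_ind (fun m => exists2 i, P i & F i = m)) => //.
- move=> a b [i Pi <-] [j Pj <-]; case: (leqP (F i) (F j)) => hij.
  + by exists i => //; rewrite (minn_idPl hij).
  + by exists j => //; rewrite (minn_idPr (ltnW hij)).
- by move=> i Pi; exists i.
Qed.

Lemma cardU_le (T : finType) (A B : {set T}) : #|A :|: B| <= #|A| + #|B|.
Proof. exact: leq_card_setU. Qed.

Section Generic.
Variable T : finType.
Variable e : rel T.
Hypothesis sym : symmetric e.
Hypothesis irr : irreflexive e.

Lemma in_nbhd (S : {set T}) v : (v \in open_nbhd e S) = [exists u in S, e u v].
Proof. by rewrite inE. Qed.

Lemma in_nbhdP (S : {set T}) v : reflect (exists2 u, u \in S & e u v) (v \in open_nbhd e S).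
Proof.
rewrite in_nbhd; apply: (iffP existsP).
- by case=> u /andP [h1 h2]; exists u.
- by case=> u h1 h2; exists u; rewrite h1 h2.
Qed.

Lemma tdsP (S : {set T}) : reflect (forall v, exists2 u, u \in S & e u v) (total_dominating e S).
Proof.
apply: (iffP eqP).
- by move=> h v; apply: (elimT (in_nbhdP S v)); rewrite h inE.
- by move=> h; apply/setP => v; rewrite in_setT; apply: (introT (in_nbhdP S v)).
Qed.

Lemma domP (S : {set T}) : reflect (forall v, v \in S \/ exists2 u, u \in S & e u v) (dominating e S).
Proof.
apply: (iffP forallP).
- move=> h v; case/orP: (h v) => [-> | /existsP [u /andP [h1 h2]]]; first by left.
  by right; exists u.
- move=> h v; case: (h v) => [-> // | [u h1 h2]].
  by apply/orP; right; apply/existsP; exists u; rewrite h1 h2.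
Qed.

Definition noiso := forall v, exists u, e v u.

Lemma tdsT : noiso -> total_dominating e setT.
Proof. by move=> h; apply/tdsP => v; case: (h v) => u hu; exists u; rewrite // sym. Qed.

Lemma gt_le (S : {set T}) : total_dominating e S -> gamma_t e <= #|S|.
Proof. exact: bigmin_le. Qed.

Lemma gt_ge k : k <= #|T| -> (forall S, total_dominating e S -> k <= #|S|) -> k <= gamma_t e.
Proof. exact: bigmin_ge. Qed.

Lemma gt_attained : noiso -> exists2 S, total_dominating e S & #|S| = gamma_t e.
Proof. by move=> h; apply: bigmin_attained; exists setT; [apply: tdsT | rewrite cardsT]. Qed.

Lemma g_le (S : {set T}) : dominating e S -> gamma e <= #|S|.
Proof. exact: bigmin_le. Qed.

Lemma domT : dominating e setT.
Proof. by apply/domP => v; left; rewrite inE. Qed.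

Lemma g_attained : exists2 S, dominating e S & #|S| = gamma e.
Proof. by apply: bigmin_attained; exists setT; [apply: domT | rewrite cardsT]. Qed.

Lemma tds_noiso (S : {set T}) : total_dominating e S -> noiso.
Proof. by move/tdsP=> h v; case: (h v) => u _ hu; exists u; rewrite sym. Qed.

Definition nb (v : T) : T := odflt v [pick u | e v u].

Lemma nbP : noiso -> forall v, e v (nb v).
Proof.
move=> h v; rewrite /nb; case: pickP => //= h0.
by case: (h v) => u hu; move: (h0 u); rewrite hu.
Qed.

Lemma gt_le_2g : noiso -> gamma_t e <= 2 * gamma e.
Proof.
move=> h; case: g_attained => X domX <-.
have tX : total_dominating e (X :|: nb @: X).
  apply/tdsP => v; move/(domP X): domX => /(_ v) [vX | [u uX hu]].
  + by exists (nb v); [rewrite inE imset_f ?orbT | rewrite sym nbP].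
  + by exists u; rewrite // inE uX.
apply: (leq_trans (gt_le tX)).
rewrite mul2n -addnn; apply: (leq_trans (leq_card_setU _ _)).
by rewrite leq_add2l leq_imset_card.
Qed.

Lemma F1_of (X : {set T}) : noiso -> dominating e X -> 2 * #|X| <= gamma_t e -> F1 e.
Proof.
move=> h dX hX; split.
  by exists setT; apply: tdsT.
apply/eqP; rewrite eqn_leq gt_le_2g //=.
by apply: (leq_trans _ hX); rewrite leq_mul2l g_le.
Qed.

Lemma gt_ge2 : 1 < #|T| -> 2 <= gamma_t e.
Proof.
move=> hT; apply: gt_ge => // S /tdsP hS.
have [v _] : exists v, v \in T by case/card_gt0P: (ltnW hT) => v; exists v.
case: (hS v) => u uS _; case: (hS u) => w wS hw.
rewrite (cardsD1 u) uS ltnS card_gt0; apply/set0Pn; exists w.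
rewrite !inE wS andbT; apply/eqP => ewu; move: hw; rewrite ewu irr //.
Qed.

Lemma private (D : {set T}) u :
  total_dominating e D ->
  (forall D', total_dominating e D' -> #|D| <= #|D'|) -> u \in D ->
  exists z, e u z /\ forall d, d \in D -> e d z -> d = u.
Proof.
move=> tD minD uD.
have ntd : ~~ total_dominating e (D :\ u).
  by apply/negP => /minD; rewrite (cardsD1 u D) uD add1n ltnn.
case: (boolP [exists z, [forall d in D :\ u, ~~ e d z]]) => [/existsP [z /forallP hz] | hn].
  have [d dD hd] := (elimT (tdsP D) tD) z.
  have du : d = u.
    apply/eqP; apply: contraTT (hz d) => hdu; rewrite !inE hdu dD /= hd //.
  subst d; exists z; split => // d' d'D hd'; apply/eqP; apply: contraTT (hz d') => hdu.
  by rewrite !inE hdu d'D /= hd'.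
case/negP: ntd; apply/tdsP => v; move: hn; rewrite negb_exists => /forallP /(_ v).
rewrite negb_forall => /existsP [d]; rewrite negb_imply negbK => /andP [h1 h2].
by exists d.
Qed.


Lemma F2_of (D1 D2 : {set T}) :
  D1 != set0 -> D2 != set0 -> D1 :&: D2 = set0 ->
  total_dominating e (D1 :|: D2) -> #|D1 :|: D2| <= gamma_t e ->
  D1 = ~: open_nbhd e D2 -> D2 = ~: open_nbhd e D1 -> F2 e.
Proof.
move=> n1 n2 d12 td hc h1 h2; exists (D1 :|: D2); split.
  by rewrite /min_tds td eqn_leq hc gt_le.
by exists D1, D2; split.
Qed.

Lemma two_elems (x y : T) : #|T| = 2 -> x != y -> forall z, z = x \/ z = y.
Proof.
move=> hT xy z; case: (boolP (z \in [set x; y])); first by rewrite !inE => /orP [] /eqP; auto.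
move=> hz; have := max_card (mem (z |: [set x; y])).
by rewrite cardsU1 hz cards2 xy hT.
Qed.

Lemma closed_conn (A : {set T}) (x y : T) :
  (forall a b, a \in A -> e a b -> b \in A) -> x \in A -> connect e x y -> y \in A.
Proof.
move=> hA xA /connectP [p hp ->]; elim: p x xA hp => //= a p IH x xA /andP [h1 h2].
by apply: IH h2; apply: hA h1.
Qed.

Lemma iso_K2 : noiso -> #|T| = 2 -> graph_iso e K2.
Proof.
move=> hn hT.
pose f := fun x => cast_ord hT (enum_rank x).
pose g := fun i => enum_val (cast_ord (esym hT) i).
have fK : cancel f g by move=> x; rewrite /f /g cast_ordK enum_rankK.
have gK : cancel g f by move=> i; rewrite /f /g enum_valK cast_ordKV.
have bf : bijective f by exists g.
exists f; split => // x y; rewrite /K2 (inj_eq (bij_inj bf)).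
case: (eqVneq x y) => [-> | xy]; first by rewrite irr.
case: (hn x) => u hu; have ux : u != x by apply/eqP => ux; move: hu; rewrite ux irr.
case: (two_elems hT xy u) => [ue | uy]; last by rewrite -uy hu.
by move: ux; rewrite ue eqxx.
Qed.
End Generic.

Lemma K2_inv (T : finType) (e : rel T) : graph_iso e K2 ->
  #|T| = 2 /\ exists a b, [/\ a != b, e a b & forall x, x = a \/ x = b].
Proof.
case=> f [bf hf]; have hT : #|T| = 2 by rewrite (bij_eq_card bf) card_ord.
split => //.
case: bf => g fK gK.
have ne : g ord0 != g (@Ordinal 2 1 isT).
  by apply/eqP => /(congr1 f); rewrite !gK.
exists (g ord0), (g (@Ordinal 2 1 isT)); split => //.
  by rewrite -hf !gK.
by move=> x; apply: two_elems.
Qed.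

Section Induced.
Variable T : finType.
Variable e : rel T.
Variable A : {set T}.
Local Notation sA := {x : T | x \in A}.
Local Notation eA := (induced e A).

Definition restr (B : {set T}) : {set sA} := [set x : sA | val x \in B].

Lemma in_restr (B : {set T}) x : (x \in restr B) = (val x \in B).
Proof. by rewrite /restr in_set. Qed.

Lemma card_restr (B : {set T}) : B \subset A -> #|restr B| = #|B|.
Proof.
move=> BA; rewrite -(card_imset (restr B) val_inj); apply: eq_card => v.
apply/imsetP/idP => [[x] | vB]; first by rewrite inE => h ->.
have vA : v \in A by apply: (subsetP BA).
by exists (exist _ v vA); rewrite // inE.
Qed.

Lemma tds_restr (B : {set T}) : B \subset A ->
  (forall v, v \in A -> exists2 u, u \in B & e u v) -> total_dominating eA (restr B).
Proof.
move=> BA h; apply/eqP/setP => x; rewrite !inE; case: x => v vA.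
case: (h v vA) => u uB hu; apply/existsP.
have uA : u \in A by apply: (subsetP BA).
by exists (exist _ u uA); rewrite inE /= uB.
Qed.

Lemma dom_restr (B : {set T}) : B \subset A ->
  (forall v, v \in A -> v \in B \/ exists2 u, u \in B & e u v) -> dominating eA (restr B).
Proof.
move=> BA h; apply/forallP => x; case: x => v vA; rewrite inE /=.
case: (h v vA) => [-> // | [u uB hu]]; apply/orP; right; apply/existsP.
have uA : u \in A by apply: (subsetP BA).
by exists (exist _ u uA); rewrite inE /= uB.
Qed.

Lemma tds_lift (D : {set sA}) : total_dominating eA D ->
  forall v, v \in A -> exists2 u, u \in val @: D & e u v.
Proof.
move=> /eqP/setP hD v vA; move: (hD (exist _ v vA)); rewrite !inE => /existsP [x /andP [h1 h2]].
by exists (val x); [apply: imset_f | ].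
Qed.

Lemma dom_lift (D : {set sA}) : dominating eA D ->
  forall v, v \in A -> v \in val @: D \/ exists2 u, u \in val @: D & e u v.
Proof.
move=> /forallP hD v vA; case/orP: (hD (exist _ v vA)) => [h | /existsP [x /andP [h1 h2]]].
  by left; apply/imsetP; exists (exist _ v vA).
by right; exists (val x); [apply: imset_f | ].
Qed.

Lemma induced_sym : symmetric e -> symmetric eA.
Proof. by move=> s x y; rewrite /induced s. Qed.
Lemma induced_irr : irreflexive e -> irreflexive eA.
Proof. by move=> i x; rewrite /induced i. Qed.
End Induced.

Lemma tds_card2 (T : finType) (e : rel T) (S : {set T}) (v : T) :
  irreflexive e -> total_dominating e S -> 2 <= #|S|.
Proof.
move=> irr /(tdsP e S) hS; case: (hS v) => u uS _; case: (hS u) => w wS hw.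
rewrite (cardsD1 u) uS ltnS card_gt0; apply/set0Pn; exists w.
rewrite !inE wS andbT; apply/eqP => ewu; move: hw; rewrite ewu irr //.
Qed.

Lemma card_le1_uniq (T : finType) (A : {set T}) x y :
  #|A| <= 1 -> x \in A -> y \in A -> x = y.
Proof. by move/card_le1_eqP => h xA yA; apply: h. Qed.

Section Prod.
Variables (TG TH : finType) (eG : rel TG) (eH : rel TH).
Hypotheses (symG : symmetric eG) (irrG : irreflexive eG).
Hypotheses (symH : symmetric eH) (irrH : irreflexive eH).
Hypotheses (niG : noiso eG) (niH : noiso eH).
Variable h00 : TH.
Local Notation P := (cart eG eH).

Lemma cart_tdsE (S : {set TG * TH}) : total_dominating P S ->
  forall g h, (exists2 h', (g, h') \in S & eH h' h) \/ (exists2 g', (g', h) \in S & eG g' g).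
Proof.
move=> /(tdsP P S) hS g h; case: (hS (g, h)) => [[g' h'] uS].
rewrite /cart /= => /orP [/andP [/eqP eg hh] | /andP [/eqP eh hg]].
  by left; exists h'; rewrite // -eg.
by right; exists g'; rewrite // -eh.
Qed.

Lemma cart_tdsI (S : {set TG * TH}) :
  (forall g h, (exists2 h', (g, h') \in S & eH h' h) \/ (exists2 g', (g', h) \in S & eG g' g)) ->
  total_dominating P S.
Proof.
move=> hS; apply/tdsP => [[g h]]; case: (hS g h) => [[h' h1 h2] | [g' h1 h2]].
  by exists (g, h'); rewrite // /cart /= eqxx h2.
by exists (g', h); rewrite // /cart /= eqxx h2 orbT.
Qed.

Lemma cart_noiso : noiso P.
Proof.
move=> [g h]; case: (niH h) => h' hh; exists (g, h'); by rewrite /cart /= eqxx hh.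
Qed.

Variable S : {set TG * TH}.
Hypothesis tS : total_dominating P S.

Definition Tf g := [set h | (g, h) \in S].
Definition U := [set g | Tf g != set0].
Definition W := ~: open_nbhd eG U.
Definition D := U :|: nb eG @: W.

Lemma inU g h : (g, h) \in S -> g \in U.
Proof. by move=> gh; rewrite inE; apply/set0Pn; exists h; rewrite inE. Qed.

Lemma Uex g : g \in U -> exists h, (g, h) \in S.
Proof. by rewrite inE => /set0Pn [h]; rewrite inE; exists h. Qed.

Lemma W_noU w g : w \in W -> g \in U -> eG g w = false.
Proof.
rewrite in_setC => /negP hw gU; apply/negP => hg; apply: hw.
by apply: (introT (in_nbhdP eG U w)); exists g.
Qed.

Lemma W_sub : W \subset U.
Proof.
apply/subsetP => w wW; case: (cart_tdsE tS w h00) => [[h' h1 _] | [g' h1 h2]].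
  exact: inU h1.
by rewrite (W_noU wW (inU h1)) in h2.
Qed.

Lemma W_fib w : w \in W -> total_dominating eH (Tf w).
Proof.
move=> wW; apply/tdsP => h; case: (cart_tdsE tS w h) => [[h' h1 h2] | [g' h1 h2]].
  by exists h'; rewrite // inE.
by rewrite (W_noU wW (inU h1)) in h2.
Qed.

Lemma W_fib2 w : w \in W -> 2 <= #|Tf w|.
Proof. by move=> wW; apply: (tds_card2 h00 irrH (W_fib wW)). Qed.

Lemma D_tds : total_dominating eG D.
Proof.
apply/tdsP => v; case: (boolP (v \in open_nbhd eG U)) => [/(in_nbhdP eG U v) [u uU hu] | hv].
  by exists u; rewrite // inE uU.
by exists (nb eG v); [rewrite inE imset_f ?orbT // inE hv | rewrite symG nbP].
Qed.

Lemma D_card : #|D| <= #|U| + #|W|.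
Proof. by apply: (leq_trans (leq_card_setU _ _)); rewrite leq_add2l leq_imset_card. Qed.

Lemma S_card : #|S| = \sum_g #|Tf g|.
Proof.
have e1 : forall (T : finType) (A : {set T}), #|A| = \sum_x (if x \in A then 1 else 0).
  by move=> T A; rewrite -sum1_card big_mkcond.
rewrite e1 (eq_bigr (fun g => \sum_h (if (g, h) \in S then 1 else 0))); last first.
  by move=> g _; rewrite e1; apply: eq_bigr => h _; rewrite inE.
rewrite (pair_bigA addn (fun g h => if (g, h) \in S then 1 else 0)).
by apply: eq_bigr => [[a b]].
Qed.

Lemma card_sum (T : finType) (A : {set T}) : #|A| = \sum_x (x \in A : nat).
Proof. by rewrite -sum1_card big_mkcond; apply: eq_bigr => x _; case: (x \in A). Qed.

Lemma fib_ge g : (g \in U) + (g \in W) <= #|Tf g|.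
Proof.
case: (boolP (g \in W)) => wW.
  by rewrite (subsetP W_sub _ wW) W_fib2.
rewrite addn0; case: (boolP (g \in U)) => // gU.
by rewrite card_gt0; move: gU; rewrite inE.
Qed.

Lemma UW_le : #|U| + #|W| <= #|S|.
Proof.
rewrite S_card (card_sum U) (card_sum W) -big_split /=.
by apply: leq_sum => g _; apply: fib_ge.
Qed.

Lemma lb : gamma_t eG <= #|S|.
Proof. exact: (leq_trans (gt_le D_tds) (leq_trans D_card UW_le)). Qed.

Hypothesis hS : #|S| <= gamma_t eG.

Lemma tight g : #|Tf g| <= (g \in U) + (g \in W).
Proof.
rewrite leqNgt; apply/negP => hg.
have : #|U| + #|W| < #|S|.
  rewrite S_card (card_sum U) (card_sum W) -big_split /=.
  rewrite (bigD1 g) //= [X in _ < X](bigD1 g) //=.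
  have : \sum_(i | i != g) ((i \in U) + (i \in W)) <= \sum_(i | i != g) #|Tf i|.
    by apply: leq_sum => i _; apply: fib_ge.
  slia.
have := gt_le D_tds; have := D_card; slia.
Qed.

Lemma D_min D' : total_dominating eG D' -> #|D| <= #|D'|.
Proof.
move=> tD; have := gt_le tD; have := D_card; have := UW_le; slia.
Qed.

Lemma U_le : #|U| <= #|S|.
Proof. have := UW_le; slia. Qed.

Lemma notU_cover v : v \notin U -> forall h, exists2 g, g \in U & eG g v /\ (g, h) \in S.
Proof.
move=> vU h; case: (cart_tdsE tS v h) => [[h' h1 _] | [g' h1 h2]].
  by rewrite (inU h1) in vU.
by exists g'; [apply: inU h1 | ].
Qed.

Section PartA.
Hypothesis H3 : 3 <= #|TH|.

Lemma W0 : W = set0.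
Proof.
apply/eqP; apply/negPn/negP => /set0Pn [w0 w0W].
have w0U : w0 \in U := subsetP W_sub _ w0W.
set y := nb eG w0.
set D' := (U :\ w0) :|: (y |: nb eG @: (W :\ w0)).
have cD' : #|D'| < #|S|.
  have c1 : #|U :\ w0| = #|U| - 1 by rewrite (cardsD1 w0 U) w0U; slia.
  have c2 : #|W :\ w0| = #|W| - 1 by rewrite (cardsD1 w0 W) w0W; slia.
  have c3 := cardU_le (U :\ w0) (y |: nb eG @: (W :\ w0)).
  have c4 : #|y |: nb eG @: (W :\ w0)| <= 1 + #|W :\ w0|.
    by rewrite cardsU1; apply: leq_add; [case: (_ \notin _) | apply: leq_imset_card].
  have c5 := UW_le; have c6 : 0 < #|W| by apply/card_gt0P; exists w0.
  have c7 : 0 < #|U| by apply/card_gt0P; exists w0.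
  have c8 : #|D'| <= #|U :\ w0| + (1 + #|W :\ w0|) := leq_trans c3 (leq_add (leqnn _) c4).
  move: c8; rewrite c1 c2; move: c5 c6 c7; clear; lia.
suff tD : total_dominating eG D' by move: (gt_le tD) cD' hS; clear; lia.
apply/tdsP => v.
case: (boolP (v \in open_nbhd eG (U :\ w0))) => [/(in_nbhdP eG _ v) [u uU hu] | hv1].
  by exists u; rewrite // /D' in_setU uU.
case: (boolP (v \in open_nbhd eG U)) => [/(in_nbhdP eG _ v) [u uU hu] | hv2].
  have uw : u = w0.
    apply/eqP; apply: contraNT hv1 => hne; apply: (introT (in_nbhdP eG _ v)).
    by exists u; rewrite // in_setD1 hne uU.
  subst u.
  have vU : v \notin U by apply/negP => vU; rewrite symG (W_noU w0W vU) in hu.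
  have : #|TH| <= 2.
    apply: (leq_trans _ (leq_trans (tight w0) _)); last by rewrite w0U w0W.
    apply: subset_leq_card; apply/subsetP => h _; rewrite inE.
    case: (notU_cover vU h) => g gU [hg gh].
    have gw : g = w0.
      apply/eqP; apply: contraNT hv1 => hne; apply: (introT (in_nbhdP eG _ v)).
      by exists g; rewrite // in_setD1 hne gU.
    by rewrite -gw.
  by move=> h2; exfalso; move: H3 h2; clear; lia.
have vW : v \in W by rewrite in_setC.
case: (eqVneq v w0) => [-> | vw].
  by exists y; [rewrite /D' in_setU in_setU1 eqxx orbT | rewrite symG nbP].
by exists (nb eG v); [rewrite /D' in_setU in_setU1 imset_f ?orbT // in_setD1 vw vW | rewrite symG nbP].
Qed.

Lemma fib1 g : #|Tf g| <= 1.
Proof.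
apply: (leq_trans (tight g)); have : g \in W = false by rewrite W0 inE.
by move=> ->; rewrite addn0; case: (g \in U).
Qed.

Lemma U_tds : total_dominating eG U.
Proof.
apply/tdsP => v; have : v \notin W by rewrite W0 inE.
by rewrite inE negbK => /(in_nbhdP eG U v).
Qed.

Lemma U_min D' : total_dominating eG D' -> #|U| <= #|D'|.
Proof. move=> tD; have := gt_le tD; have := U_le; slia. Qed.

Lemma fib_eq g h1 h2 : (g, h1) \in S -> (g, h2) \in S -> h1 = h2.
Proof. by move=> a b; apply: (card_le1_uniq (fib1 g)); rewrite inE. Qed.

Lemma not_two v a b : v \notin U -> (forall g, g \in U -> eG g v -> g = a \/ g = b) -> False.
Proof.
move=> vU hab.
have : #|TH| <= 2.
  apply: (leq_trans (subset_leq_card (B := Tf a :|: Tf b) _)).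
    apply/subsetP => h _; case: (notU_cover vU h) => g gU [hg gh].
    by rewrite in_setU !inE; case: (hab g gU hg) => e; rewrite -e gh ?orbT.
  apply: (leq_trans (cardU_le _ _)); have := fib1 a; have := fib1 b; slia.
slia.
Qed.

Hypothesis connG : forall x y : TG, connect eG x y.
Variable g00 : TG.
Hypothesis ntG : 1 < #|TG|.

Lemma partA : #|TG| = 2 /\ gamma eH = 1.
Proof.
case: (boolP [forall g, g \in U]) => [/forallP allU | ].
  case: (private U_tds U_min (allU g00)) => z [hz pz].
  case: (private U_tds U_min (allU z)) => z2 [hz2 pz2].
  have z2u : z2 = g00 by apply: pz; [rewrite allU | rewrite symG].
  subst z2.
  have hA : forall a b, a \in [set g00; z] -> eG a b -> b \in [set g00; z].
    move=> a b; rewrite !inE => /orP [] /eqP -> hb.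
      by rewrite (pz2 b (allU b)) ?eqxx ?orbT // symG.
    by rewrite (pz b (allU b)) ?eqxx // symG.
  have cardG : #|TG| = 2.
    apply/eqP; rewrite eqn_leq ntG andbT.
    have sub : [set: TG] \subset [set g00; z].
      by apply/subsetP => y _; apply: (closed_conn hA _ (connG g00 y)); rewrite !inE eqxx.
    rewrite -cardsT; apply: (leq_trans (subset_leq_card sub)).
    by rewrite cards2; case: (_ != _).
  split => //.
  case: (Uex (allU g00)) => h uh.
  have zh : (z, h) \in S.
    case: (cart_tdsE tS g00 h) => [[h' h1 h2] | [g' h1 h2]].
      by move: h2; rewrite (fib_eq h1 uh) irrH.
    by rewrite -(pz2 g' (allU g')) // symG.
  have domh : dominating eH [set h].
    apply/domP => k; case: (cart_tdsE tS g00 k) => [[h' h1 h2] | [g' h1 h2]].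
      by right; exists h'; rewrite // inE (fib_eq h1 uh).
    have g'z : g' = z by exact: pz2 (allU g') h2.
    subst g'; by left; rewrite inE (fib_eq h1 zh).
  apply/eqP; rewrite eqn_leq (leq_trans (g_le domh)) ?cards1 //.
  case: (g_attained eH) => X dX <-; rewrite card_gt0; apply/set0Pn.
  move/(domP eH X): dX => /(_ h00) [hX | [u uX _]]; by eauto.
rewrite negb_forall => /existsP [x xU].
case: (notU_cover xU h00) => g1 g1U [hg1 g1h].
have [h1 h1ne] : exists h1, h1 != h00.
  case/card_gt1P: (ltn_trans (isT : 1 < 2) (leq_trans (isT : 2 < 3) H3)) => a [b [_ _ ab]].
  case: (eqVneq a h00) => [ah | ah]; last by exists a.
  by exists b; rewrite -ah eq_sym.
case: (notU_cover xU h1) => g2 g2U [hg2 g2h].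
have g12 : g1 != g2.
  by apply/eqP => e12; subst g2; move: h1ne; rewrite (fib_eq g2h g1h) eqxx.
case: (private U_tds U_min g1U) => p1 [hp1 pp1].
case: (private U_tds U_min g2U) => p2 [hp2 pp2].
have pU : forall g p, g \in U -> eG g p -> (forall d, d \in U -> eG d p -> d = g) -> p \in U.
  move=> g p gU hgp pp; apply/negPn/negP => pnU.
  by apply: (not_two pnU (a := g) (b := g)) => d dU hd; left; apply: pp.
have p1U := pU _ _ g1U hp1 pp1; have p2U := pU _ _ g2U hp2 pp2.
have p12 : p1 != p2.
  by apply/eqP => e12; subst p2; move: g12; rewrite (pp2 g1 g1U hp1) eqxx.
set D' := (U :\: [set p1; p2]) :|: [set x].
have cD' : #|D'| < #|U|.
  have c1 := cardsID [set p1; p2] U.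
  have c2 : U :&: [set p1; p2] = [set p1; p2].
    by apply/setIidPr/subsetP => y; rewrite in_set2 => /orP [] /eqP ->.
  have c3 := cardU_le (U :\: [set p1; p2]) [set x].
  move: c1 c3; rewrite c2 cards2 p12 cards1 /= -/D' => c1 c3; move: c1 c3; clear; lia.
suff tD : total_dominating eG D' by move: (U_min tD) cD'; clear; lia.
apply/tdsP => v; have [d dU hd] := (elimT (tdsP eG U) U_tds) v.
case: (boolP (d \in [set p1; p2])) => dp; last by exists d; rewrite // /D' in_setU in_setD dp dU.
case: (boolP (v \in U)) => vU.
  exists x; first by rewrite /D' in_setU in_set1 eqxx orbT.
  move: dp; rewrite in_set2 => /orP [] /eqP dpi; subst d.
    by have := pp1 v vU; rewrite symG => /(_ hd) ->; rewrite symG.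
  by have := pp2 v vU; rewrite symG => /(_ hd) ->; rewrite symG.
case: (boolP [exists g, (g \in U :\: [set p1; p2]) && eG g v]) => [/existsP [g /andP [h1' h2']] | hn].
  by exists g; rewrite // /D' in_setU h1'.
exfalso; apply: (not_two vU (a := p1) (b := p2)) => g gU hg.
move: hn; rewrite negb_exists => /forallP /(_ g); rewrite hg andbT in_setD gU andbT negbK in_set2.
by case/orP => /eqP; auto.
Qed.
End PartA.

Lemma layerG (a b : TH) : (forall h, h = a \/ h = b) ->
  forall g, (g, b) \in S \/ exists2 u, (u, a) \in S & eG u g.
Proof.
move=> allab g.
case: (cart_tdsE tS g a) => [[h' h1 h2] | [g' h1 h2]]; last by right; exists g'.
case: (allab h') => eh; first by move: h2; rewrite eh irrH.
by left; rewrite -eh.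
Qed.

Section K2gen.
Variables a b : TH.
Hypothesis nab : a != b.
Hypothesis allab : forall h, h = a \/ h = b.
Let allba : forall h, h = b \/ h = a.
Proof. by move=> h; case: (allab h); auto. Qed.

Lemma inW g : (g \in W) = ((g, a) \in S) && ((g, b) \in S).
Proof.
apply/idP/idP => [gW | /andP [ga gb]].
  have /(tdsP eH) tf := W_fib gW.
  have hb : (g, b) \in S.
    case: (tf a) => h'; rewrite inE => h1 h2; case: (allab h') => eh.
      by move: h2; rewrite eh irrH.
    by rewrite -eh.
  have ha : (g, a) \in S.
    case: (tf b) => h'; rewrite inE => h1 h2; case: (allab h') => eh.
      by rewrite -eh.
    by move: h2; rewrite eh irrH.
  by rewrite ha hb.
have h2 : 2 <= #|Tf g|.
  apply: (leq_trans _ (subset_leq_card (A := [set a; b]) _)); first by rewrite cards2 nab.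
  by apply/subsetP => h; rewrite in_set2 => /orP [] /eqP ->; rewrite inE.
have := tight g; rewrite (inU ga) /=; case: (g \in W) => //; slia.
Qed.

Lemma UD u : u \in U -> u \in D.
Proof. by move=> uU; rewrite in_setU uU. Qed.

Lemma step u z : (u, b) \notin S -> (forall d, d \in D -> eG d z -> d = u) -> (z, a) \in S.
Proof.
move=> ub pz; case: (layerG allba z) => // [[s sb hs]].
by move: ub; rewrite -(pz s (UD (inU sb)) hs) sb.
Qed.

Lemma pairL u : (u, a) \in S -> (u, b) \notin S ->
  exists z, [/\ (z, a) \in S, (z, b) \notin S, eG u z,
    (forall d, d \in D -> eG d z -> d = u) & (forall d, d \in D -> eG d u -> d = z)].
Proof.
move=> ua ub.
have key : forall u z, (u, a) \in S -> (u, b) \notin S -> eG u z ->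
    (forall d, d \in D -> eG d z -> d = u) -> (z, a) \in S /\ (z, b) \notin S.
  move=> u' z ua' ub' hz pz; have za := step ub' pz; split => //.
  apply/negP => zb; have zW : z \in W by rewrite inW za zb.
  by rewrite (W_noU zW (inU ua')) in hz.
case: (private D_tds D_min (UD (inU ua))) => z [hz pz].
case: (key _ _ ua ub hz pz) => za zb.
case: (private D_tds D_min (UD (inU za))) => z2 [hz2 pz2].
case: (key _ _ za zb hz2 pz2) => z2a _.
have z2u : z2 = u by apply: pz; [apply: UD (inU z2a) | rewrite symG].
subst z2; by exists z; split.
Qed.

Lemma noY v s : (v, a) \in S -> (v, b) \notin S -> (s, b) \in S -> eG s v -> False.
Proof.
move=> va vb sb hs; case: (pairL va vb) => z [_ zb _ _ pz].
by move: zb; rewrite -(pz s (UD (inU sb)) hs) sb.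
Qed.


End K2gen.

Definition Sl (h : TH) := [set g | (g, h) \in S].

Section K2cases.
Variables h0 h1 : TH.
Hypothesis n01 : h0 != h1.
Hypothesis all01 : forall h, h = h0 \/ h = h1.
Let n10 : h1 != h0. Proof. by rewrite eq_sym. Qed.
Let all10 : forall h, h = h1 \/ h = h0.
Proof. by move=> h; case: (all01 h); auto. Qed.

Lemma cS : #|S| = #|Sl h0| + #|Sl h1|.
Proof.
have -> : S = setX (Sl h0) [set h0] :|: setX (Sl h1) [set h1].
  apply/setP => [[g h]]; rewrite in_setU !in_setX !in_set1 !inE /=.
  by case: (all01 h) => ->; rewrite eqxx ?(negbTE n01) ?(negbTE n10) ?andbT ?andbF ?orbF.
rewrite cardsU !cardsX !cards1 !muln1.
suff -> : setX (Sl h0) [set h0] :&: setX (Sl h1) [set h1] = set0 by rewrite cards0 subn0.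
apply/setP => [[g h]]; rewrite !inE /=; apply/negP => /andP [/andP [_ /eqP e0] /andP [_ /eqP e1]].
by move: n01; rewrite -e0 e1 eqxx.
Qed.

Lemma caseA : (forall g, (g, h0) \in S -> (g, h1) \in S) -> F1 eG.
Proof.
move=> hY0.
pose qp u z := [&& (z, h1) \in S, (z, h0) \notin S, eG u z,
   [forall d in D, eG d u ==> (d == z)] & [forall d in D, eG d z ==> (d == u)]].
pose q u := odflt u [pick z | qp u z].
have qP : forall u, (u, h1) \in S -> (u, h0) \notin S -> qp u (q u).
  move=> u u1 u0; rewrite /q; case: pickP => [z // | hn].
  case: (pairL n10 all10 u1 u0) => z [z1 z0 hz pz pu].
  move: (hn z); rewrite /qp z1 z0 hz /=; case/negP; apply/andP; split.
    by apply/forallP => d; apply/implyP => dD; apply/implyP => hd; rewrite (pu d dD hd).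
  by apply/forallP => d; apply/implyP => dD; apply/implyP => hd; rewrite (pz d dD hd).
have qq : forall u, (u, h1) \in S -> (u, h0) \notin S -> q (q u) = u.
  move=> u u1 u0; have := qP u u1 u0; rewrite /qp => /and5P [z1 z0 hz _ /forallP pz].
  have := qP _ z1 z0; rewrite /qp => /and5P [zz1 _ hz2 _ _].
  have Dq : q (q u) \in D := UD (inU zz1).
  by apply/eqP; move: (pz (q (q u))); rewrite Dq /= symG hz2.
pose R := [set u | [&& (u, h1) \in S, (u, h0) \notin S & enum_rank u < enum_rank (q u)]].
pose X := Sl h0 :&: Sl h1.
pose D0 := X :|: R.
have dD0 : dominating eG D0.
  apply/domP => v; case: (layerG all01 v) => [v1 | [u u0 hu]]; last first.
    by right; exists u; rewrite // /D0 in_setU in_setI !inE u0 hY0.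
  case: (boolP ((v, h0) \in S)) => v0; first by left; rewrite /D0 in_setU in_setI !inE v0 v1.
  case: (ltngtP (enum_rank v) (enum_rank (q v))) => hr.
  - by left; rewrite /D0 in_setU !inE v1 (negbTE v0) hr orbT.
  - have := qP v v1 v0; case/and5P => z1 z0 hz _ _.
    right; exists (q v); last by rewrite symG.
    by rewrite /D0 in_setU !inE z1 (negbTE z0) (qq v v1 v0) hr orbT.
  - have := qP v v1 v0; case/and5P => _ _ hz _ _.
    by move: hz; rewrite -(enum_rank_inj (val_inj hr)) irrG.
apply: (F1_of symG niG dD0).
have cD0 : #|D0| <= #|X| + #|R| by apply: cardU_le.
have cR : 2 * #|R| <= #|Sl h1 :\: Sl h0|.
  have inj : {in R &, injective q}.
    move=> x y; rewrite !inE => /and3P [x1 x0 _] /and3P [y1 y0 _] hxy.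
    by rewrite -(qq x x1 x0) hxy qq.
  have disj : R :&: q @: R = set0.
    apply/setP => x; rewrite !inE; apply/negP => /andP [/and3P [x1 x0 hx] /imsetP [y yR xy]].
    move: yR; rewrite inE => /and3P [y1 y0 hy]; subst x.
    by move: hx; rewrite (qq y y1 y0) => /(ltn_trans hy); rewrite ltnn.
  have := cardsU R (q @: R); rewrite disj cards0 subn0 (card_in_imset inj) => hU.
  rewrite mul2n -addnn -hU; apply: subset_leq_card; apply/subsetP => x.
  rewrite in_setU => /orP [| /imsetP [y yR ->]].
    by rewrite !inE => /and3P [-> -> _].
  by move: yR; rewrite inE => /and3P [y1 y0 _]; have := qP y y1 y0; case/and5P => z1 z0 _ _ _; rewrite !inE z1 z0.
have cX0 : #|Sl h0| = #|X|.
  apply: eq_card => g; rewrite /X in_setI !inE; case: (boolP ((g, h0) \in S)) => // g0.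
  by rewrite hY0.
have cX1 := cardsID (Sl h0) (Sl h1).
have cX : X = Sl h1 :&: Sl h0 by rewrite /X setIC.
have := cS; rewrite -cX in cX1; slia.
Qed.

Lemma caseC : Sl h0 != set0 -> Sl h1 != set0 -> Sl h0 :&: Sl h1 = set0 -> F2 eG.
Proof.
move=> ne0 ne1 d01.
have nd : forall v, (v, h0) \in S -> (v, h1) \in S -> False.
  move=> v v0 v1; have : v \in Sl h0 :&: Sl h1 by rewrite in_setI !inE v0 v1.
  by rewrite d01 inE.
apply: (F2_of (D1 := Sl h0) (D2 := Sl h1)) => //.
- apply/tdsP => v; case: (boolP (v \in W)) => [| vW].
    by rewrite (inW n01 all01) => /andP [v0 v1]; case: (nd v v0 v1).
  move: vW; rewrite in_setC negbK => /(in_nbhdP eG U v) [u uU hu].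
  case: (Uex uU) => h uh; exists u => //; rewrite in_setU !inE.
  by case: (all01 h) => <-; rewrite uh ?orbT.
- have := cardU_le (Sl h0) (Sl h1); have := cS; slia.
- apply/setP => v; rewrite in_setC; apply/idP/idP => [| nv].
    rewrite inE => v0; apply/negP => /(in_nbhdP eG _ v) [s]; rewrite inE => s1 hs.
    by apply: (noY n01 all01 v0 _ s1 hs); apply/negP => v1; apply: (nd v v0 v1).
  rewrite inE; case: (layerG all10 v) => // [[u u1 hu]].
  by case/negP: nv; apply: (introT (in_nbhdP eG _ v)); exists u; rewrite ?inE.
- apply/setP => v; rewrite in_setC; apply/idP/idP => [| nv].
    rewrite inE => v1; apply/negP => /(in_nbhdP eG _ v) [s]; rewrite inE => s0 hs.
    by apply: (noY n10 all10 v1 _ s0 hs); apply/negP => v0; apply: (nd v v0 v1).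
  rewrite inE; case: (layerG all01 v) => // [[u u0 hu]].
  by case/negP: nv; apply: (introT (in_nbhdP eG _ v)); exists u; rewrite ?inE.
Qed.

Lemma caseD : Sl h0 :&: Sl h1 != set0 -> Sl h0 :\: Sl h1 != set0 -> Sl h1 :\: Sl h0 != set0 -> F3 eG.
Proof.
move=> neX ne0 ne1.
set X := Sl h0 :&: Sl h1.
set Y0 := Sl h0 :\: Sl h1.
set Y1 := Sl h1 :\: Sl h0.
set V1 := X :|: open_nbhd eG X.
set V2 := ~: V1.
have inX : forall g, (g \in X) = ((g, h0) \in S) && ((g, h1) \in S).
  by move=> g; rewrite in_setI !inE.
have inY0 : forall g, (g \in Y0) = ((g, h0) \in S) && ((g, h1) \notin S).
  by move=> g; rewrite in_setD !inE andbC.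
have inY1 : forall g, (g \in Y1) = ((g, h1) \in S) && ((g, h0) \notin S).
  by move=> g; rewrite in_setD !inE andbC.
have UX : forall g, g \in U -> g \notin open_nbhd eG X.
  move=> g gU; apply/negP => /(in_nbhdP eG _ g) [x]; rewrite inX -(inW n01 all01) => xW hx.
  by rewrite symG (W_noU xW gU) in hx.
have Y0V2 : Y0 \subset V2.
  apply/subsetP => y; rewrite inY0 => /andP [y0 y1].
  by rewrite in_setC in_setU inX (negbTE y1) andbF (negbTE (UX _ (inU y0))).
have Y1V2 : Y1 \subset V2.
  apply/subsetP => y; rewrite inY1 => /andP [y1 y0].
  by rewrite in_setC in_setU inX (negbTE y0) (negbTE (UX _ (inU y1))).
set e1 := induced eG V1.
set e2 := induced eG V2.
have s1 : symmetric e1 := induced_sym (A := V1) symG.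
have i1 : irreflexive e1 := induced_irr (A := V1) irrG.
have s2 : symmetric e2 := induced_sym (A := V2) symG.
have i2 : irreflexive e2 := induced_irr (A := V2) irrG.
set B1 := X :|: nb eG @: X.
have B1V1 : B1 \subset V1.
  apply/subsetP => y; rewrite in_setU => /orP [yX | /imsetP [x xX ->]].
    by rewrite in_setU yX.
  rewrite in_setU; apply/orP; right; apply: (introT (in_nbhdP eG _ _)); exists x => //.
  exact: nbP.
have t1 : total_dominating e1 (restr V1 B1).
  apply: tds_restr => // v; rewrite in_setU => /orP [vX | /(in_nbhdP eG _ v) [u uX hu]].
    by exists (nb eG v); [rewrite in_setU imset_f ?orbT | rewrite symG nbP].
  by exists u; rewrite // in_setU uX.
have gt1 : gamma_t e1 <= 2 * #|X|.
  apply: (leq_trans (gt_le t1)); rewrite card_restr // mul2n -addnn.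
  by apply: (leq_trans (cardU_le _ _)); rewrite leq_add2l leq_imset_card.
have XV1 : X \subset V1 by apply/subsetP => x xX; rewrite in_setU xX.
have d1 : dominating e1 (restr V1 X).
  apply: dom_restr => // v; rewrite in_setU => /orP [vX | /(in_nbhdP eG _ v) [u uX hu]].
    by left.
  by right; exists u.
have g1 : gamma e1 <= #|X| by rewrite -(card_restr XV1) g_le.
have ni1 : noiso e1 := tds_noiso s1 t1.
have gtg1 : gamma_t e1 <= 2 * gamma e1 := gt_le_2g s1 ni1.
have Y01V2 : Y0 :|: Y1 \subset V2 by rewrite subUset Y0V2 Y1V2.
have t2 : total_dominating e2 (restr V2 (Y0 :|: Y1)).
  apply: tds_restr => // v; rewrite in_setC in_setU negb_or => /andP [vX vN].
  case: (layerG all01 v) => [v1 | [u u0 hu]].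
    have v0 : (v, h0) \notin S by apply: contra vX => v0; rewrite inX v0 v1.
    case: (layerG all10 v) => [v0' | [u u1 hu]]; first by rewrite v0' in v0.
    exists u => //; rewrite in_setU inY1 u1 /=; apply/orP; right.
    by apply: contra vN => u0; apply: (introT (in_nbhdP eG _ _)); exists u; rewrite // inX u0 u1.
  exists u => //; rewrite in_setU inY0 u0 /=.
  by apply/orP; left; apply: contra vN => u1; apply: (introT (in_nbhdP eG _ _)); exists u; rewrite // inX u0 u1.
have gt2 : gamma_t e2 <= #|Y0| + #|Y1|.
  by apply: (leq_trans (gt_le t2)); rewrite card_restr // cardU_le.
have ni2 : noiso e2 := tds_noiso s2 t2.
have gsum : gamma_t eG <= gamma_t e1 + gamma_t e2.
  case: (gt_attained s1 ni1) => M1 tM1 <-.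
  case: (gt_attained s2 ni2) => M2 tM2 <-.
  have tL : total_dominating eG (val @: M1 :|: val @: M2).
    apply/tdsP => v; case: (boolP (v \in V1)) => vV.
      by case: (tds_lift tM1 vV) => u uM hu; exists u; rewrite // in_setU uM.
    have vV2 : v \in V2 by rewrite in_setC.
    by case: (tds_lift tM2 vV2) => u uM hu; exists u; rewrite // in_setU uM orbT.
  apply: (leq_trans (gt_le tL)); apply: (leq_trans (cardU_le _ _)).
  by apply: leq_add; apply: leq_imset_card.
have cSS : #|S| = 2 * #|X| + #|Y0| + #|Y1|.
  move: (cS) (cardsID (Sl h1) (Sl h0)) (cardsID (Sl h0) (Sl h1)).
  rewrite [Sl h1 :&: Sl h0]setIC -/X -/Y0 -/Y1.
  move: #|S| #|X| #|Y0| #|Y1| #|Sl h0| #|Sl h1|; clear; lia.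
have chains : [/\ gamma_t e1 = 2 * gamma e1, gamma_t e2 = #|Y0| + #|Y1| & gamma_t eG = gamma_t e1 + gamma_t e2].
  move: hS gsum gt1 g1 gtg1 gt2; rewrite cSS.
  move: #|X| #|Y0| #|Y1| (gamma_t e1) (gamma_t e2) (gamma e1) (gamma_t eG); clear; move=> *; split; lia.
case: chains => chain1 chain2 chain3.
exists V1, V2; split.
- by case/set0Pn: neX => x xX; apply/set0Pn; exists x; apply: (subsetP XV1).
- by case/set0Pn: ne0 => y yY; apply/set0Pn; exists y; apply: (subsetP Y0V2).
- by rewrite setUCr.
- by rewrite setICr.
split => //.
- by split => //; exists (restr V1 B1).
- apply: (F2_of (D1 := restr V2 Y0) (D2 := restr V2 Y1)).
  + by rewrite -card_gt0 card_restr // card_gt0.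
  + by rewrite -card_gt0 card_restr // card_gt0.
  + apply/setP => x; rewrite in_setI !in_restr inY0 inY1 in_set0.
    by apply/negP => /andP [/andP [_ x1] /andP [x1' _]]; rewrite x1' in x1.
  + suff -> : restr V2 Y0 :|: restr V2 Y1 = restr V2 (Y0 :|: Y1) by [].
    by apply/setP => x; rewrite in_setU !in_restr in_setU.
  + rewrite chain2; apply: (leq_trans (cardU_le _ _)).
    by rewrite !card_restr.
  + apply/setP => x; rewrite in_setC; apply/idP/idP => [| nx].
      rewrite in_restr inY0 => /andP [x0 x1]; apply/negP => /(in_nbhdP e2 _ x) [y]; rewrite in_restr inY1.
      move=> /andP [y1 _] hy; exact: (noY n01 all01 x0 x1 y1 hy).
    rewrite in_restr inY0; case: x nx => v vV nx /=.
    have vN : v \notin open_nbhd eG X by move: (vV); rewrite in_setC in_setU negb_or => /andP [].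
    have vX : v \notin X by move: (vV); rewrite in_setC in_setU negb_or => /andP [].
    case: (layerG all10 v) => [v0 | [u u1 hu]].
      by rewrite v0 /=; apply: contra vX => v1; rewrite inX v0 v1.
    exfalso; case: (boolP ((u, h0) \in S)) => u0.
      by case/negP: vN; apply: (introT (in_nbhdP eG _ _)); exists u; rewrite // inX u0 u1.
    have uV : u \in V2 by apply: (subsetP Y1V2); rewrite inY1 u1 u0.
    case/negP: nx; apply: (introT (in_nbhdP e2 _ _)); exists (exist _ u uV) => //.
    by rewrite in_restr inY1 u1 u0.
  + apply/setP => x; rewrite in_setC; apply/idP/idP => [| nx].
      rewrite in_restr inY1 => /andP [x1 x0]; apply/negP => /(in_nbhdP e2 _ x) [y]; rewrite in_restr inY0.
      move=> /andP [y0 _] hy; exact: (noY n10 all10 x1 x0 y0 hy).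
    rewrite in_restr inY1; case: x nx => v vV nx /=.
    have vN : v \notin open_nbhd eG X by move: (vV); rewrite in_setC in_setU negb_or => /andP [].
    have vX : v \notin X by move: (vV); rewrite in_setC in_setU negb_or => /andP [].
    case: (layerG all01 v) => [v1 | [u u0 hu]].
      by rewrite v1 /=; apply: contra vX => v0; rewrite inX v0 v1.
    exfalso; case: (boolP ((u, h1) \in S)) => u1.
      by case/negP: vN; apply: (introT (in_nbhdP eG _ _)); exists u; rewrite // inX u0 u1.
    have uV : u \in V2 by apply: (subsetP Y0V2); rewrite inY0 u0 u1.
    case/negP: nx; apply: (introT (in_nbhdP e2 _ _)); exists (exist _ u uV) => //.
    by rewrite in_restr inY0 u0 u1.
Qed.

End K2cases.

Lemma K2main (h0 h1 : TH) : h0 != h1 -> (forall h, h = h0 \/ h = h1) -> F1 eG \/ F2 eG \/ F3 eG.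
Proof.
move=> n01 all01.
have n10 : h1 != h0 by rewrite eq_sym.
have all10 : forall h, h = h1 \/ h = h0 by move=> h; case: (all01 h); auto.
case: (boolP [forall g, ((g, h0) \in S) ==> ((g, h1) \in S)]) => [/forallP hA | hA].
  by left; apply: (caseA n01 all01) => g; apply/implyP/hA.
case: (boolP [forall g, ((g, h1) \in S) ==> ((g, h0) \in S)]) => [/forallP hB | hB].
  by left; apply: (caseA n10 all10) => g; apply/implyP/hB.
have ne0 : Sl h0 :\: Sl h1 != set0.
  move: hA; rewrite negb_forall => /existsP [g]; rewrite negb_imply => /andP [g0 g1].
  by apply/set0Pn; exists g; rewrite in_setD !inE g0 g1.
have ne1 : Sl h1 :\: Sl h0 != set0.
  move: hB; rewrite negb_forall => /existsP [g]; rewrite negb_imply => /andP [g1 g0].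
  by apply/set0Pn; exists g; rewrite in_setD !inE g0 g1.
case: (eqVneq (Sl h0 :&: Sl h1) set0) => hX.
  right; left; apply: (caseC n01 all01) => //.
    by case/set0Pn: ne0 => g; rewrite in_setD => /andP [_ g0]; apply/set0Pn; exists g.
  by case/set0Pn: ne1 => g; rewrite in_setD => /andP [_ g1]; apply/set0Pn; exists g.
by right; right; apply: (caseD n01 all01).
Qed.

End Prod.

Lemma cart_sym (TG TH : finType) (eG : rel TG) (eH : rel TH) :
  symmetric eG -> symmetric eH -> symmetric (cart eG eH).
Proof.
by move=> sG sH [a b] [c d]; rewrite /cart /= sG sH (eq_sym a) (eq_sym b).
Qed.

Lemma conn_noiso (T : finType) (e : rel T) : connected_graph e -> 1 < #|T| -> noiso e.
Proof.
move=> c hT v; case/card_gt1P: hT => x [y [_ _ xy]].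
have [w wv] : exists w, w != v.
  case: (eqVneq x v) => [xv | xv]; last by exists x.
  by exists y; rewrite -xv eq_sym.
case/connectP: (c v w) => [[| a p] /= hp hw]; first by rewrite hw eqxx in wv.
by case/andP: hp => h _; exists a.
Qed.

Section Upper.
Variables (TG TH : finType) (eG : rel TG) (eH : rel TH).
Hypotheses (symG : symmetric eG) (irrG : irreflexive eG).
Hypotheses (symH : symmetric eH) (irrH : irreflexive eH).
Hypotheses (niG : noiso eG).
Variables a b : TH.
Hypothesis nab : a != b.
Hypothesis eab : eH a b.
Hypothesis allab : forall h, h = a \/ h = b.
Local Notation P := (cart eG eH).

Definition oth k := if k == a then b else a.
Lemma othP k : eH (oth k) k.
Proof.
rewrite /oth; case: (eqVneq k a) => [-> | ka]; first by rewrite symH.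
by case: (allab k) => kk; [rewrite kk eqxx in ka | rewrite kk].
Qed.

Lemma up_F1 : F1 eG -> exists2 S, total_dominating P S & #|S| <= gamma_t eG.
Proof.
case=> _ eq; case: (g_attained eG) => X dX cX.
exists (setX X setT).
  apply: cart_tdsI => g k; move/(domP eG X): dX => /(_ g) [gX | [u uX hu]].
    by left; exists (oth k); [rewrite in_setX gX in_setT | apply: othP].
  by right; exists u; rewrite // in_setX uX in_setT.
rewrite cardsX cardsT eq cX.
have -> : #|TH| = 2.
  apply/eqP; rewrite eqn_leq; apply/andP; split.
    rewrite -cardsT; apply: (leq_trans (subset_leq_card (B := [set a; b]) _)).
      by apply/subsetP => h _; rewrite in_set2; case: (allab h) => ->; rewrite eqxx ?orbT.
    by rewrite cards2; case: (_ != _).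
  by apply/card_gt1P; exists a, b.
by rewrite mulnC.
Qed.

Lemma up_F2 : F2 eG -> exists2 S, total_dominating P S & #|S| <= gamma_t eG.
Proof.
case=> D [/andP [tD /eqP cD] [D1 [D2 [n1 n2 uD iD [e1 e2]]]]].
exists (setX D1 [set a] :|: setX D2 [set b]).
  apply: cart_tdsI => g k; case: (allab k) => ->.
    case: (boolP (g \in D2)) => gD2.
      by left; exists b; [rewrite in_setU !in_setX gD2 !in_set1 eqxx orbT | rewrite symH].
    move: gD2; rewrite e2 in_setC negbK => /(in_nbhdP eG) [u uD1 hu].
    by right; exists u; rewrite // in_setU !in_setX uD1 !in_set1 eqxx.
  case: (boolP (g \in D1)) => gD1.
    by left; exists a; rewrite // in_setU !in_setX gD1 !in_set1 eqxx.
  move: gD1; rewrite e1 in_setC negbK => /(in_nbhdP eG) [u uD2 hu].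
  by right; exists u; rewrite // in_setU !in_setX uD2 !in_set1 eqxx orbT.
apply: (leq_trans (cardU_le _ _)); rewrite !cardsX !cards1 !muln1 -cD -uD cardsU iD cards0.
by rewrite subn0.
Qed.

Lemma up_F3 : F3 eG -> exists2 S, total_dominating P S & #|S| <= gamma_t eG.
Proof.
case=> V1 [V2 [n1 n2 u12 i12 [[_ gt1] [D [/andP [tD /eqP cD] [D1 [D2 [m1 m2 uD iD [e1 e2]]]]]] geq]]].
case: (g_attained (induced eG V1)) => X dX cX.
pose A1 := setX (val @: X) [set: TH].
pose A2 := setX (val @: D1) [set a] :|: setX (val @: D2) [set b].
exists (A1 :|: A2).
  apply: cart_tdsI => g k.
  have : g \in V1 :|: V2 by rewrite u12 in_setT.
  rewrite in_setU => /orP [gV | gV].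
    case: (dom_lift dX gV) => [gX | [u uX hu]].
      by left; exists (oth k); [rewrite in_setU in_setX gX in_setT | apply: othP].
    by right; exists u; rewrite // in_setU in_setX uX in_setT.
  pose x : {x : TG | x \in V2} := exist _ g gV.
  case: (allab k) => ->.
    case: (boolP (x \in D2)) => xD2.
      left; exists b; last by rewrite symH.
      by rewrite /A1 /A2 !in_setU !in_setX !in_set1 eqxx andbT (imset_f val xD2) !orbT.
    move: xD2; rewrite e2 in_setC negbK => /(in_nbhdP (induced eG V2)) [y yD1 hy].
    right; exists (val y); last by [].
    by rewrite /A1 /A2 !in_setU !in_setX !in_set1 eqxx andbT (imset_f val yD1) !orbT.
  case: (boolP (x \in D1)) => xD1.
    left; exists a => //.
    by rewrite /A1 /A2 !in_setU !in_setX !in_set1 eqxx andbT (imset_f val xD1) !orbT.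
  move: xD1; rewrite e1 in_setC negbK => /(in_nbhdP (induced eG V2)) [y yD2 hy].
  right; exists (val y); last by [].
  by rewrite /A1 /A2 !in_setU !in_setX !in_set1 eqxx andbT (imset_f val yD2) !orbT.
have c1 : #|A1| <= 2 * gamma (induced eG V1).
  rewrite /A1 cardsX cardsT -cX.
  have -> : #|TH| = 2.
    apply/eqP; rewrite eqn_leq; apply/andP; split.
      rewrite -cardsT; apply: (leq_trans (subset_leq_card (B := [set a; b]) _)).
        by apply/subsetP => h _; rewrite in_set2; case: (allab h) => ->; rewrite eqxx ?orbT.
      by rewrite cards2; case: (_ != _).
    by apply/card_gt1P; exists a, b.
  by rewrite mulnC leq_mul2l leq_imset_card orbT.
have c2 : #|A2| <= #|D1| + #|D2|.
  apply: (leq_trans (cardU_le _ _)); rewrite !cardsX !cards1 !muln1.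
  by apply: leq_add; apply: leq_imset_card.
have c3 : #|D1| + #|D2| = gamma_t (induced eG V2).
  by rewrite -cD -uD cardsU iD cards0 subn0.
apply: (leq_trans (cardU_le _ _)); rewrite geq gt1.
by move: c1 c2 c3; clear; lia.
Qed.
End Upper.

Theorem theorem4 (TG TH : finType) (eG : rel TG) (eH : rel TH) :
  simple_graph eG -> simple_graph eH ->
  connected_graph eG -> connected_graph eH ->
  nontrivial_graph TG -> nontrivial_graph TH ->
  gamma_t eH = 2 ->
  (gamma_t eG = gamma_t (cart eG eH) <->
   (graph_iso eG K2 /\ gamma eH = 1) \/
   (graph_iso eH K2 /\ (F1 eG \/ F2 eG \/ F3 eG))).
Proof.
move=> [symG irrG] [symH irrH] cG cH nG nH _.
have niG := conn_noiso cG nG; have niH := conn_noiso cH nH.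
have [g00 _] : exists g : TG, g \in TG by case/card_gt0P: (ltnW nG) => g; exists g.
have [h00 _] : exists h : TH, h \in TH by case/card_gt0P: (ltnW nH) => h; exists h.
have sP := cart_sym symG symH.
have niP := cart_noiso eG niH.
case: (gt_attained sP niP) => S tS cS.
have lbP : gamma_t eG <= gamma_t (cart eG eH) by rewrite -cS; apply: (lb symG irrH niG h00 tS).
split => [heq | ].
  have hS : #|S| <= gamma_t eG by rewrite cS heq.
  case: (ltngtP 2 #|TH|) => [H3 | H1 | H2].
  - left; case: (partA symG irrH niG h00 tS hS H3 cG g00 nG) => c2 g1.
    by split => //; apply: iso_K2.
  - by move: nH; rewrite /nontrivial_graph; move: H1; clear; lia.
  - case/card_gt1P: nH => a [b [_ _ ab]].
    have allab := two_elems (esym H2) ab.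
    right; split; first by apply: iso_K2.
    exact: (K2main symG irrG irrH niG h00 tS hS ab allab).
case=> [[isoG g1] | [isoH hF]].
  case: (K2_inv isoG) => c2 _.
  case: (g_attained eH) => X dX cX.
  move/eqP: cX; rewrite g1 => /cards1P [h Xh]; subst X.
  have tS' : total_dominating (cart eG eH) (setX [set: TG] [set h]).
    apply: cart_tdsI => g k; case: (eqVneq k h) => [-> | kh].
      by case: (niG g) => u hu; right; exists u; rewrite ?in_setX ?in_setT ?in_set1 ?eqxx // symG.
    move/(domP eH _): dX => /(_ k) [| [u]]; first by rewrite in_set1 (negbTE kh).
    rewrite in_set1 => /eqP -> hu; left; exists h => //.
    by rewrite in_setX in_setT in_set1 eqxx.
  have := gt_le tS'; rewrite cardsX cardsT cards1 c2 => hup.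
  have := gt_ge2 irrG nG.
  by move: hup lbP; clear; lia.
case: (K2_inv isoH) => _ [a [b [ab eab allab]]].
have [S' tS' cS'] : exists2 S', total_dominating (cart eG eH) S' & #|S'| <= gamma_t eG.
  case: hF => [hF | [hF | hF]].
  - exact: (up_F1 symH ab eab allab hF).
  - exact: (up_F2 symH eab allab hF).
  - exact: (up_F3 symH ab eab allab hF).
have := gt_le tS'; move: lbP cS'; clear; lia.
Qed.
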